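(* Let $G=(V,E)$ be an undirected graph on $n$ vertices, let $\alpha\in(0,1)$, and let the jump distribution be uniform, $q_w=1/n$ for all $w\in V$. Suppose $u,v\in V$ are distinct non-adjacent vertices, $v$ has at least one neighbour, and there is a graph automorphism $\sigma$ of $G$ with $\sigma(v)=u$ and $\sigma(u)=v$. Let $G'=(V,E\cup\{uv\})$. Then $$\pi^{G'}_v>\pi^{G}_v\quad\text{and}\quad\pi^{G'}_u>\pi^{G}_u.$$
   Context: For an undirected graph $H$ on $V$, the PageRank of a vertex $w$ with at least one neighbour is $\pi^H_w=\alpha\,\frac{\sum_{x\in V}q_x\phi_{xw}}{1-\frac{1-\alpha}{|\Gamma(w)|}\sum_{i\in\Gamma(w)}\phi_{iw}}$, where $\Gamma(w)$ is the neighbour set in $H$ and $\phi_{xw}$ is the probability that an $\alpha$-random walk on $H$ (at each step with probability $\alpha$ it jumps to a vertex drawn from $\bm q$, otherwise moves to a uniformly random neighbour; a vertex with no neighbours forces a jump) started at $x$ visits $w$ before its first jump. When $H$ has no isolated vertices this is the stationary probability of $w$ under the $\alpha$-random walk. A graph automorphism is a permutation $\sigma$ of $V$ with $\sigma(a)\sigma(b)\in E$ iff $ab\in E$. *)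

(* Defs.v *)
From Stdlib Require Import Reals ClassicalEpsilon.
From mathcomp Require Import all_boot.

Set Implicit Arguments.
Unset Strict Implicit.
Unset Printing Implicit Defensive.

Local Open Scope R_scope.

Definition rsum (T : finType) (P : pred T) (f : T -> R) : R :=
  \big[Rplus/0]_(x | P x) f x.

(* A graph on the finite vertex set T is given by its adjacency relation e
   (undirected simple graph: e symmetric and irreflexive). *)
Definition deg (T : finType) (e : rel T) (x : T) : nat := #|[pred y | e x y]|.

(* phik e a w k x = probability that the a-random walk on e started at x
   visits w at one of the times 0..k, before its first jump.
   At a vertex x <> w: with prob. a it jumps (walk stops, w not visited);
   otherwise it moves to a uniform neighbour; an isolated vertex forces a jump. *)
Fixpoint phik (T : finType) (e : rel T) (a : R) (w : T) (k : nat) (x : T) : R :=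
  match k with
  | O => if x == w then 1 else 0
  | S k' =>
      if x == w then 1
      else if deg e x == 0%N then 0
      else (1 - a) / INR (deg e x) * rsum (e x) (phik e a w k')
  end.

(* phi e a x w = probability that the walk started at x visits w before its
   first jump = lim_k phik e a w k x (the sequence is nondecreasing, bounded). *)
Definition phi (T : finType) (e : rel T) (a : R) (x w : T) : R :=
  epsilon (inhabits 0) (fun l => Un_cv (fun k => phik e a w k x) l).

Definition pagerank (T : finType) (e : rel T) (a : R) (q : T -> R) (w : T) : R :=
  a * rsum predT (fun x => q x * phi e a x w)
  / (1 - (1 - a) / INR (deg e w) * rsum (e w) (fun i => phi e a i w)).

Definition add_edge (T : finType) (e : rel T) (u v : T) : rel T :=
  fun x y => e x y || ((x == u) && (y == v)) || ((x == v) && (y == u)).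

(* Main.v *)
Require Import Defs.
From Stdlib Require Import Reals Lra Lia ClassicalEpsilon.
From HB Require Import structures.
From mathcomp Require Import all_boot.
Set Implicit Arguments. Unset Strict Implicit. Unset Printing Implicit Defensive.
Local Open Scope R_scope.

Lemma Rplus_assoc' : associative Rplus.
Proof. by move=> x y z; rewrite Rplus_assoc. Qed.
Lemma Rplus_comm' : commutative Rplus.
Proof. exact: Rplus_comm. Qed.
Lemma Rplus_0_l' : left_id 0 Rplus.
Proof. exact: Rplus_0_l. Qed.
HB.instance Definition _ := Monoid.isComLaw.Build R 0 Rplus Rplus_assoc' Rplus_comm' Rplus_0_l'.

Section RS.
Variable T : finType.

Lemma rsum_lin (P : pred T) f g c1 c2 :
  rsum P (fun y => c1 * f y + c2 * g y) = c1 * rsum P f + c2 * rsum P g.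
Proof.
rewrite /rsum; elim: (index_enum T) => [|x r IH]; first by rewrite !big_nil; ring.
rewrite !big_cons; case: (P x) => //; rewrite IH; ring.
Qed.

Lemma rsum_le (P : pred T) f g : (forall x, P x -> f x <= g x) -> rsum P f <= rsum P g.
Proof.
move=> H; rewrite /rsum; elim: (index_enum T) => [|x r IH]; first by rewrite !big_nil; lra.
rewrite !big_cons; case Px: (P x) => //; have := H x Px; lra.
Qed.

Lemma rsum_const (P : pred T) c : rsum P (fun _ => c) = INR #|P| * c.
Proof.
rewrite /rsum big_const; elim: #|P| => [|n IH]; first by rewrite /=; ring.
rewrite S_INR /= IH; ring.
Qed.

Lemma rsum_ge0 (P : pred T) f : (forall x, P x -> 0 <= f x) -> 0 <= rsum P f.
Proof. move=> H; have := rsum_le (f:=fun _ => 0) H; rewrite rsum_const; lra. Qed.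

Lemma rsum_ge1 (P : pred T) f y : (forall x, P x -> 0 <= f x) -> P y -> f y <= rsum P f.
Proof.
move=> H Py; rewrite /rsum (bigD1 y) //=.
have : 0 <= \big[Rplus/0]_(i | P i && (i != y)) f i.
  apply: (big_ind (fun z => 0 <= z)); [lra | move=> *; lra | move=> i /andP[Pi _]; exact: H].
lra.
Qed.

Lemma cv_const c : Un_cv (fun _ => c) c.
Proof. move=> eps He; exists 0%nat => n _; rewrite /R_dist Rminus_diag Rabs_R0; lra. Qed.

Lemma cv_ext (u w : nat -> R) l : (forall k, u k = w k) -> Un_cv u l -> Un_cv w l.
Proof. move=> E H eps He; have [N HN] := H eps He; exists N => n Hn; rewrite -E; exact: HN. Qed.

Lemma rsum_cv (P : pred T) (f : nat -> T -> R) l :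
  (forall x, Un_cv (fun k => f k x) (l x)) -> Un_cv (fun k => rsum P (f k)) (rsum P l).
Proof.
move=> H; rewrite /rsum; elim: (index_enum T) => [|x r IH].
  rewrite big_nil; apply: (cv_ext (u := fun _ => 0)); first by move=> k; rewrite big_nil.
  exact: cv_const.
rewrite big_cons; apply: cv_ext; first by move=> k; rewrite big_cons.
case: (P x) => //; exact: CV_plus.
Qed.

Lemma exists_min (f : T -> R) (x1 : T) : exists x0, forall x, f x0 <= f x.
Proof.
suff H : forall s : seq T, exists x0, forall x, x \in x1 :: s -> f x0 <= f x.
  have [x0 Hx0] := H (enum T); exists x0 => x; apply: Hx0.
  by rewrite inE mem_enum orbT.
elim=> [|y s [x0 IH]].
  by exists x1 => x; rewrite inE => /eqP ->; lra.
case: (Rle_lt_dec (f x0) (f y)) => Hy.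
  exists x0 => x; rewrite !inE => /or3P[/eqP->|/eqP->|xs].
  - by apply: IH; rewrite inE eqxx.
  - lra.
  - by apply: IH; rewrite inE xs orbT.
exists y => x; rewrite !inE => /or3P[/eqP->|/eqP->|xs].
- have := IH x1; rewrite inE eqxx => /(_ isT); lra.
- lra.
- have := IH x; rewrite inE xs orbT => /(_ isT); lra.
Qed.
End RS.

Lemma cv_bnd (u : nat -> R) l lo hi : (forall k, lo <= u k <= hi) -> Un_cv u l -> lo <= l <= hi.
Proof.
move=> B H; split; apply: Rnot_lt_le => Hl.
- have [N HN] := H (lo - l) ltac:(lra); have := HN N (le_n N); have := B N.
  rewrite /R_dist; move=> ? /Rabs_def2; lra.
- have [N HN] := H (l - hi) ltac:(lra); have := HN N (le_n N); have := B N.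
  rewrite /R_dist; move=> ? /Rabs_def2; lra.
Qed.

Section Walk.
Variables (T : finType) (e : rel T) (a : R).
Hypotheses (ha0 : 0 < a) (ha1 : a < 1).

Lemma deg_rsum x : INR (deg e x) = rsum (e x) (fun _ => 1).
Proof. by rewrite rsum_const Rmult_1_r. Qed.

Lemma avg_bnd x (f : T -> R) lo hi : deg e x <> 0%nat ->
  (forall y, e x y -> lo <= f y <= hi) ->
  (1 - a) * lo <= (1 - a) / INR (deg e x) * rsum (e x) f <= (1 - a) * hi.
Proof.
move=> Hd H.
have Hp : 0 < INR (deg e x) by apply: lt_0_INR; lia.
have Hlo := rsum_le (P := e x) (f := fun _ => lo) (g := f) (fun y Hy => proj1 (H y Hy)).
have Hhi := rsum_le (P := e x) (f := f) (g := fun _ => hi) (fun y Hy => proj2 (H y Hy)).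
have Hd' : INR #|e x| = INR (deg e x) by rewrite deg_rsum rsum_const Rmult_1_r.
rewrite !rsum_const Hd' in Hlo Hhi.
have Hc : 0 <= (1 - a) / INR (deg e x).
  apply: Rmult_le_pos; [lra | left; exact: Rinv_0_lt_compat].
split.
- have := Rmult_le_compat_l _ _ _ Hc Hlo.
  replace ((1 - a) / INR (deg e x) * (INR (deg e x) * lo)) with ((1 - a) * lo); first lra.
  field; lra.
- have := Rmult_le_compat_l _ _ _ Hc Hhi.
  replace ((1 - a) / INR (deg e x) * (INR (deg e x) * hi)) with ((1 - a) * hi); first lra.
  field; lra.
Qed.

Variable w : T.

Lemma phik_bnd k x : 0 <= phik e a w k x <= 1.
Proof.
elim: k x => [|k IH] x /=; first by case: (x == w); lra.
case: (x == w); first lra.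
case: eqP => Hd; first lra.
have := avg_bnd (f := phik e a w k) Hd (fun y _ => IH y); nra.
Qed.

Lemma phik_mono k x : phik e a w k x <= phik e a w k.+1 x.
Proof.
elim: k x => [|k IH] x.
  rewrite /=; case: (x == w); first lra.
  case: eqP => Hd; first lra.
  have [H _] := avg_bnd (f := phik e a w 0) Hd (fun y _ => phik_bnd 0 y).
  rewrite Rmult_0_r in H; exact: H.
rewrite [phik _ _ _ k.+1 x]/= [phik _ _ _ k.+2 x]/=.
case: (x == w); first lra.
case: eqP => Hd; first lra.
apply: Rmult_le_compat_l.
  apply: Rmult_le_pos; [lra | left; apply: Rinv_0_lt_compat; apply: lt_0_INR; lia].
by apply: rsum_le => y _; apply: IH.
Qed.

Lemma phi_cv x : Un_cv (fun k => phik e a w k x) (phi e a x w).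
Proof.
rewrite /phi; apply: epsilon_spec.
have [l Hl] := @growing_cv (fun k => phik e a w k x) (fun k => phik_mono k x)
  ltac:(exists 1 => _ [k ->]; exact: (proj2 (phik_bnd k x))).
by exists l.
Qed.

Lemma phi_bnd x : 0 <= phi e a x w <= 1.
Proof. exact: cv_bnd (fun k => phik_bnd k x) (phi_cv x). Qed.

Lemma phi_w : phi e a w w = 1.
Proof.
eapply UL_sequence; first exact: phi_cv.
apply: cv_ext (cv_const 1) => k.
by case: k => [|k] /=; rewrite eqxx.
Qed.

Lemma phi_eq x : x != w -> phi e a x w =
  if deg e x == 0%nat then 0 else (1 - a) / INR (deg e x) * rsum (e x) (fun y => phi e a y w).
Proof.
move=> /negbTE xw.
have H1 : Un_cv (fun k => phik e a w k.+1 x) (phi e a x w).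
  move=> eps He; have [N HN] := phi_cv x He; exists N => n Hn; apply: HN; lia.
eapply UL_sequence; first exact: H1.
apply: cv_ext => [k|]; first by rewrite /= xw; reflexivity.
case: (deg e x == 0%nat); first exact: cv_const.
apply: CV_mult; first exact: cv_const.
by apply: rsum_cv => y; exact: phi_cv.
Qed.

Lemma phi_le x : x != w -> phi e a x w <= 1 - a.
Proof.
move=> xw; rewrite phi_eq //; case: eqP => Hd; first lra.
have := avg_bnd (f := fun y => phi e a y w) Hd (fun y _ => phi_bnd y); lra.
Qed.
End Walk.

Definition Lop (T : finType) (e : rel T) (a : R) (f : T -> R) (x : T) : R :=
  if deg e x == 0%nat then 0 else (1 - a) / INR (deg e x) * rsum (e x) f.
Definition sol (T : finType) (e : rel T) (a : R) (b f : T -> R) : Prop :=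
  forall x, f x = b x + Lop e a f x.

Lemma rsum_ext (T : finType) (P : pred T) f g : (forall y, f y = g y) -> rsum P f = rsum P g.
Proof. by move=> H; apply: eq_bigr => y _; rewrite H. Qed.
Lemma rsum_eqP (T : finType) (P Q : pred T) f : P =1 Q -> rsum P f = rsum Q f.
Proof. by move=> H; apply: eq_bigl. Qed.

Section Sol.
Variables (T : finType) (e : rel T) (a : R).
Hypotheses (ha0 : 0 < a) (ha1 : a < 1).

Lemma Lop_ext f g x : (forall y, f y = g y) -> Lop e a f x = Lop e a g x.
Proof. by move=> H; rewrite /Lop (rsum_ext _ H). Qed.

Lemma Lop_lin f g c1 c2 x :
  Lop e a (fun y => c1 * f y + c2 * g y) x = c1 * Lop e a f x + c2 * Lop e a g x.
Proof. by rewrite /Lop rsum_lin; case: eqP => _; ring. Qed.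

Lemma INR_deg_ne0 x : deg e x <> 0%nat -> INR (deg e x) <> 0.
Proof. by move=> H; apply: not_0_INR. Qed.

Lemma Lop_const c x : Lop e a (fun _ => c) x = if deg e x == 0%nat then 0 else (1 - a) * c.
Proof.
rewrite /Lop; case: eqP => Hd //.
have Hd' : INR #|e x| = INR (deg e x) by rewrite deg_rsum rsum_const Rmult_1_r.
rewrite rsum_const Hd'; field; exact: INR_deg_ne0.
Qed.

Lemma avg_lo x (f : T -> R) lo : deg e x <> 0%nat ->
  (forall y, e x y -> lo <= f y) -> (1 - a) * lo <= (1 - a) / INR (deg e x) * rsum (e x) f.
Proof.
move=> Hd H.
have Hp : 0 < INR (deg e x) by apply: lt_0_INR; lia.
have Hlo := rsum_le (P := e x) (f := fun _ => lo) (g := f) H.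
have Hd' : INR #|e x| = INR (deg e x) by rewrite deg_rsum rsum_const Rmult_1_r.
rewrite !rsum_const Hd' in Hlo.
have Hc : 0 <= (1 - a) / INR (deg e x).
  apply: Rmult_le_pos; [lra | left; exact: Rinv_0_lt_compat].
have := Rmult_le_compat_l _ _ _ Hc Hlo.
replace ((1 - a) / INR (deg e x) * (INR (deg e x) * lo)) with ((1 - a) * lo); first lra.
field; lra.
Qed.

Lemma Lop_ge0 f x : (forall y, 0 <= f y) -> 0 <= Lop e a f x.
Proof.
move=> H; rewrite /Lop; case: eqP => Hd; first lra.
have := avg_lo (f := f) (lo := 0) Hd (fun y _ => H y); lra.
Qed.

Lemma super_nonneg f : (forall x, Lop e a f x <= f x) -> forall x, 0 <= f x.
Proof.
move=> H x; have [x0 H0] := exists_min f x.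
suff : 0 <= f x0 by have := H0 x; lra.
apply: Rnot_lt_le => Hneg; have := H x0; rewrite /Lop; case: eqP => Hd; first lra.
have := avg_lo (f := f) (lo := f x0) Hd (fun y _ => H0 y); nra.
Qed.

Lemma sol_unique b f g : sol e a b f -> sol e a b g -> forall x, f x = g x.
Proof.
move=> Hf Hg.
have K : forall c, (forall x, Lop e a (fun y => c * f y + (- c) * g y) x <= c * f x + (- c) * g x).
  move=> c x; rewrite Lop_lin (Hf x) (Hg x); apply: Req_le; ring.
move=> x; have := super_nonneg (K 1) x; have := super_nonneg (K (-1)) x; lra.
Qed.

Section Aut.
Variables (s : T -> T).
Hypotheses (s_bij : bijective s) (s_aut : forall x y, e (s x) (s y) = e x y).

Lemma rsum_s x f : rsum (e (s x)) f = rsum (e x) (fun y => f (s y)).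
Proof.
rewrite /rsum (reindex s); last exact: onW_bij.
by apply: eq_bigl => y; rewrite s_aut.
Qed.

Lemma rsumT_s f : rsum predT f = rsum predT (fun y => f (s y)).
Proof. by rewrite /rsum (reindex s) //; exact: onW_bij. Qed.

Lemma deg_s x : deg e (s x) = deg e x.
Proof. by apply: INR_eq; rewrite !deg_rsum rsum_s. Qed.

Lemma Lop_s f x : Lop e a f (s x) = Lop e a (fun y => f (s y)) x.
Proof. by rewrite /Lop deg_s rsum_s. Qed.

Lemma sol_s b f : sol e a b f -> sol e a (fun x => b (s x)) (fun x => f (s x)).
Proof. by move=> H x; rewrite H Lop_s. Qed.
End Aut.

Definition rr (w : T) := (1 - a) / INR (deg e w) * rsum (e w) (fun y => phi e a y w).
Definition gfun (w x : T) := / (1 - rr w) * phi e a x w.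

Lemma rr_bnd w : deg e w <> 0%nat -> 0 <= rr w <= 1 - a.
Proof.
move=> Hd; have := avg_bnd ha1 (f := fun y => phi e a y w) (lo := 0) (hi := 1) Hd
  (fun y _ => phi_bnd e ha0 ha1 w y).
rewrite /rr; lra.
Qed.

Lemma gfun_sol w : deg e w <> 0%nat -> sol e a (fun x => if x == w then 1 else 0) (gfun w).
Proof.
move=> Hd; have Hr := rr_bnd Hd.
have E : forall x, Lop e a (gfun w) x = / (1 - rr w) * Lop e a (fun y => phi e a y w) x.
  move=> x; rewrite -[RHS]Rplus_0_r -(Rmult_0_l (Lop e a (fun y => phi e a y w) x)).
  rewrite -Lop_lin; apply: Lop_ext => y; rewrite /gfun; ring.
move=> x; rewrite E /gfun; case: (eqVneq x w) => [->|xw].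
  rewrite phi_w // /Lop; move/eqP/negbTE: Hd => ->; rewrite -/(rr w); field; lra.
rewrite (phi_eq e ha0 ha1 xw) /Lop; ring.
Qed.

Lemma gfun_ge0 w x : deg e w <> 0%nat -> 0 <= gfun w x.
Proof.
move=> Hd; have Hr := rr_bnd Hd; have := phi_bnd e ha0 ha1 w x; rewrite /gfun => ?.
apply: Rmult_le_pos; [left; apply: Rinv_0_lt_compat; lra | lra].
Qed.

Lemma gfun_w w : deg e w <> 0%nat -> 1 <= gfun w w.
Proof.
move=> Hd; have Hr := rr_bnd Hd; rewrite /gfun phi_w // Rmult_1_r.
rewrite -Rinv_1; apply: Rinv_le_contravar; lra.
Qed.

Lemma pagerank_eq w : pagerank e a (fun _ => / INR #|T|) w = a * / INR #|T| * rsum predT (gfun w).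
Proof.
rewrite /pagerank -/(rr w) /gfun.
have E : forall c (f : T -> R), rsum predT (fun y => c * f y) = c * rsum predT f.
  move=> c f; rewrite -[RHS]Rplus_0_r -(Rmult_0_l (rsum predT f)) -rsum_lin.
  apply: rsum_ext => y; ring.
rewrite !E /Rdiv; ring.
Qed.
End Sol.

Lemma rsum_lin3 (T : finType) (P : pred T) h f g c1 c2 :
  rsum P (fun y => h y + (c1 * f y + c2 * g y)) = rsum P h + (c1 * rsum P f + c2 * rsum P g).
Proof.
rewrite /rsum; elim: (index_enum T) => [|x r IH]; first by rewrite !big_nil; ring.
rewrite !big_cons; case: (P x) => //; rewrite IH; ring.
Qed.

Lemma Lop_lin3 (T : finType) (e : rel T) a h f g c1 c2 x :
  Lop e a (fun y => h y + (c1 * f y + c2 * g y)) x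
  = Lop e a h x + (c1 * Lop e a f x + c2 * Lop e a g x).
Proof. by rewrite /Lop rsum_lin3; case: eqP => _; ring. Qed.

Lemma rsum_add1 (T : finType) (P : pred T) y0 f : ~~ P y0 ->
  rsum (fun y => P y || (y == y0)) f = f y0 + rsum P f.
Proof.
move=> Py0; rewrite /rsum (bigD1 y0) /=; last by rewrite eqxx orbT.
congr (_ + _); apply: eq_bigl => y.
by case: (eqVneq y y0) => [->|]; rewrite ?andbF ?andbT ?orbF // (negbTE Py0).
Qed.

Lemma sol_bext (T : finType) (e : rel T) a b b' f :
  (forall x, b x = b' x) -> sol e a b f -> sol e a b' f.
Proof. by move=> E H x; rewrite -E; exact: H. Qed.

Lemma arith_u b D X Y Z p q r s0 t w0 : D <> 0 -> D + 1 <> 0 ->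
  p = 0 + b / D * X -> q = 1 + b / (D + 1) * (Y + r) -> s0 = 0 + b / (D + 1) * (Z + t) ->
  p + ((b * w0 - p) / (D + 1) * q + (1 - w0 + b * p) / (D + 1) * s0)
  = 0 + b / (D + 1) * ((X + ((b * w0 - p) / (D + 1) * Y + (1 - w0 + b * p) / (D + 1) * Z))
       + (w0 + ((b * w0 - p) / (D + 1) * r + (1 - w0 + b * p) / (D + 1) * t))).
Proof. move=> H1 H2 -> -> ->; field; lra. Qed.

Lemma arith_v b D X Y Z p q r s0 t w0 : D <> 0 -> D + 1 <> 0 ->
  w0 = 1 + b / D * X -> r = 0 + b / (D + 1) * (Y + q) -> t = 1 + b / (D + 1) * (Z + s0) ->
  w0 + ((b * w0 - p) / (D + 1) * r + (1 - w0 + b * p) / (D + 1) * t)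
  = 1 + b / (D + 1) * ((X + ((b * w0 - p) / (D + 1) * Y + (1 - w0 + b * p) / (D + 1) * Z))
       + (p + ((b * w0 - p) / (D + 1) * q + (1 - w0 + b * p) / (D + 1) * s0))).
Proof. move=> H1 H2 -> -> ->; field; lra. Qed.

Theorem theorem5p4 (T : finType) (e : rel T)
  (e_sym : symmetric e) (e_irr : irreflexive e)
  (a : R) (ha0 : Rlt 0 a) (ha1 : Rlt a 1)
  (u v : T) (huv : u != v) (hnadj : ~~ e u v)
  (hv : exists y, e v y)
  (s : T -> T) (s_bij : bijective s)
  (s_aut : forall x y, e (s x) (s y) = e x y)
  (hsv : s v = u) (hsu : s u = v) :
  let q := fun _ : T => Rinv (INR #|T|) in
  Rgt (pagerank (add_edge e u v) a q v) (pagerank e a q v) /\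
  Rgt (pagerank (add_edge e u v) a q u) (pagerank e a q u).
Proof.
move=> q; rewrite /q; clear q.
set e' := add_edge e u v.
have [y0 hy0] := hv.
have huv' : v != u by rewrite eq_sym.
have y0v : y0 != v by apply: contraTneq hy0 => ->; rewrite e_irr.
have y0u : y0 != u by apply: contraTneq hy0 => ->; rewrite e_sym.
set d := deg e v.
have Hd : d <> 0%nat.
  move=> H0; have := rsum_ge1 (P := e v) (f := fun _ => 1) (fun _ _ => Rle_0_1) hy0.
  by rewrite -deg_rsum -/d H0 /=; lra.
have HD : INR d <> 0 by apply: not_0_INR.
have HD0 : 0 < INR d by apply: lt_0_INR; lia.
have Hdu : deg e u = d by rewrite -hsv deg_s.
have s_inj := bij_inj s_bij.
have sEu : forall x, (s x == u) = (x == v) by move=> x; rewrite -hsv (inj_eq s_inj).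
have sEv : forall x, (s x == v) = (x == u) by move=> x; rewrite -hsu (inj_eq s_inj).
have s_aut' : forall x y, e' (s x) (s y) = e' x y.
  move=> x y; rewrite /e' /add_edge s_aut !sEu !sEv -!orbA; congr (_ || _); exact: orbC.
have e'u : forall y, e' u y = e u y || (y == v).
  by move=> y; rewrite /e' /add_edge eqxx (negbTE huv) /= ?andbF ?orbF.
have e'v : forall y, e' v y = e v y || (y == u).
  by move=> y; rewrite /e' /add_edge eqxx (negbTE huv') /= ?andbF ?orbF.
have e'x : forall x y, x != u -> x != v -> e' x y = e x y.
  by move=> x y xu xv; rewrite /e' /add_edge (negbTE xu) (negbTE xv) /= !orbF.
have hnadj' : ~~ e v u by rewrite e_sym.
have rs'u : forall f, rsum (e' u) f = f v + rsum (e u) f.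
  by move=> f; rewrite (rsum_eqP f e'u) rsum_add1.
have rs'v : forall f, rsum (e' v) f = f u + rsum (e v) f.
  by move=> f; rewrite (rsum_eqP f e'v) rsum_add1.
have dg'u : INR (deg e' u) = INR d + 1.
  by rewrite deg_rsum rs'u -deg_rsum Hdu /=; ring.
have dg'v : INR (deg e' v) = INR d + 1.
  by rewrite deg_rsum rs'v -deg_rsum -/d /=; ring.
have nz : forall x, INR (deg e' x) = INR d + 1 -> deg e' x <> 0%nat.
  by move=> x H H0; rewrite H0 /= in H; lra.
have Lu : forall f, Lop e' a f u = (1 - a) / (INR d + 1) * (rsum (e u) f + f v).
  move=> f; rewrite /Lop; move/eqP/negbTE: (nz _ dg'u) => ->; rewrite dg'u rs'u; ring.
have Lv : forall f, Lop e' a f v = (1 - a) / (INR d + 1) * (rsum (e v) f + f u).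
  move=> f; rewrite /Lop; move/eqP/negbTE: (nz _ dg'v) => ->; rewrite dg'v rs'v; ring.
have Lx : forall f x, x != u -> x != v -> Lop e' a f x = Lop e a f x.
  move=> f x xu xv; rewrite /Lop (rsum_eqP f (fun y => e'x x y xu xv)).
  have -> // : deg e' x = deg e x.
  by apply: INR_eq; rewrite !deg_rsum (rsum_eqP _ (fun y => e'x x y xu xv)).
have L0u : forall f, Lop e a f u = (1 - a) / INR d * rsum (e u) f.
  by move=> f; rewrite /Lop Hdu; move/eqP/negbTE: Hd => ->.
have L0v : forall f, Lop e a f v = (1 - a) / INR d * rsum (e v) f.
  by move=> f; rewrite /Lop -/d; move/eqP/negbTE: Hd => ->.
have Hdu0 : deg e u <> 0%nat by rewrite Hdu.
have Hdv' := nz _ dg'v.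
have Hdu' := nz _ dg'u.
have Hgv := gfun_sol ha0 ha1 Hd.
have Hgu := gfun_sol ha0 ha1 Hdu0.
have Hgv' := gfun_sol ha0 ha1 Hdv'.
have Hgu' := gfun_sol ha0 ha1 Hdu'.
set gv := gfun e a v in Hgv. set gu := gfun e a u in Hgu.
set gv' := gfun e' a v in Hgv'. set gu' := gfun e' a u in Hgu'.
have sym : forall x, gu (s x) = gv x.
  have H1 := sol_s s_bij s_aut Hgu.
  have H2 : sol e a (fun x => if x == v then 1 else 0) (fun x => gu (s x)).
    by apply: sol_bext H1 => x; rewrite sEu.
  by move=> x; have := sol_unique ha0 ha1 H2 Hgv x.
have sym' : forall x, gu' (s x) = gv' x.
  have H1 := sol_s s_bij s_aut' Hgu'.
  have H2 : sol e' a (fun x => if x == v then 1 else 0) (fun x => gu' (s x)).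
    by apply: sol_bext H1 => x; rewrite sEu.
  by move=> x; have := sol_unique ha0 ha1 H2 Hgv' x.
have hSu : rsum predT gu = rsum predT gv.
  by rewrite (rsumT_s s_bij gu); apply: rsum_ext.
have hSu' : rsum predT gu' = rsum predT gv'.
  by rewrite (rsumT_s s_bij gu'); apply: rsum_ext.
rewrite !pagerank_eq -/gv -/gu -/gv' -/gu' hSu hSu'.
suff key : rsum predT gv < rsum predT gv'.
  have Hn : 0 < a * / INR #|T|.
    apply: Rmult_lt_0_compat => //; apply: Rinv_0_lt_compat; apply: lt_0_INR.
    by apply/ltP; apply/card_gt0P; exists u.
  split; apply: Rmult_lt_compat_l => //.
have guv : gu v = gv u by rewrite -hsu sym.
have hpos : 0 < 1 + (- a * gv v + - a * gv u).
  pose Dd := fun y => 1 + (- a * gv y + - a * gu y).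
  have key2 : forall x, a * (1 - (if x == v then 1 else 0) - (if x == u then 1 else 0))
                        + Lop e a Dd x <= Dd x.
    move=> x; rewrite /Dd (Lop_lin3 _ _ (fun _ => 1)) Lop_const.
    have E1 := Hgv x; have E2 := Hgu x.
    have I1 : (if deg e x == 0%nat then 0 else (1 - a) * 1) <= 1 - a by case: ifP => _; lra.
    rewrite E1 E2; lra.
  have hd01 : forall x, 0 <= 1 - (if x == v then 1 else 0) - (if x == u then 1 else 0).
    move=> x; case: (eqVneq x v) => [->|xv]; first by rewrite (negbTE huv'); lra.
    by case: (x == u) => /=; lra.
  have Dnn : forall x, 0 <= Dd x.
    apply: (super_nonneg (e := e) ha0 ha1 (f := Dd)) => x.
    have := key2 x; have := Rmult_le_pos _ _ (Rlt_le _ _ ha0) (hd01 x); lra.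
  have Dy0 : a <= Dd y0.
    have := key2 y0; rewrite (negbTE y0v) (negbTE y0u).
    have := Lop_ge0 e ha1 y0 Dnn; lra.
  have Dv : Lop e a Dd v <= Dd v.
    have := key2 v; rewrite eqxx (negbTE huv'); lra.
  rewrite L0v in Dv.
  have := rsum_ge1 (P := e v) (f := Dd) (fun x _ => Dnn x) hy0.
  have Hc : 0 < (1 - a) / INR d by apply: Rdiv_lt_0_compat; lra.
  move=> Hs.
  have H1 := Rmult_le_compat_l _ _ _ (Rlt_le _ _ Hc) Hs.
  have H2 := Rmult_le_compat_l _ _ _ (Rlt_le _ _ Hc) Dy0.
  have H3 := Rmult_lt_0_compat _ _ Hc ha0.
  have Dvv : Dd v = 1 + (- a * gv v + - a * gv u) by rewrite /Dd guv.
  rewrite -Dvv; lra.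
set c1 := ((1 - a) * gv v - gv u) / (INR d + 1).
set c2 := (1 - gv v + (1 - a) * gv u) / (INR d + 1).
have HD1 : INR d + 1 <> 0 by lra.
have HF : sol e' a (fun x => if x == v then 1 else 0) (fun x => gv x + (c1 * gu' x + c2 * gv' x)).
  move=> x; case: (eqVneq x u) => [->|xu].
    rewrite Lu rsum_lin3 (negbTE huv).
    have E1 := Hgv u; rewrite (negbTE huv) L0u in E1.
    have E2 := Hgu' u; rewrite eqxx Lu in E2.
    have E3 := Hgv' u; rewrite (negbTE huv) Lu in E3.
    exact: (arith_u (gv v) HD HD1 E1 E2 E3).
  case: (eqVneq x v) => [->|xv].
    rewrite Lv rsum_lin3.
    have E1 := Hgv v; rewrite eqxx L0v in E1.
    have E2 := Hgu' v; rewrite (negbTE huv') Lv in E2.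
    have E3 := Hgv' v; rewrite eqxx Lv in E3.
    exact: (arith_v (gv u) HD HD1 E1 E2 E3).
  rewrite Lx // Lop_lin3.
  have E1 := Hgv x; have E2 := Hgu' x; have E3 := Hgv' x.
  rewrite (negbTE xv) in E1 E3 *; rewrite (negbTE xu) Lx // in E2.
  rewrite Lx // in E3.
  rewrite E1 E2 E3; ring.
have hF : forall x, gv' x = gv x + (c1 * gu' x + c2 * gv' x).
  by move=> x; have := sol_unique ha0 ha1 Hgv' HF x.
have ES : rsum predT gv' = rsum predT gv + (c1 * rsum predT gv' + c2 * rsum predT gv').
  by rewrite {1}(rsum_ext _ hF) rsum_lin3 hSu'.
have Hc12 : c1 + c2 = (1 + (- a * gv v + - a * gv u)) / (INR d + 1).
  by rewrite /c1 /c2; field.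
have Hc12p : 0 < c1 + c2 by rewrite Hc12; apply: Rdiv_lt_0_compat; lra.
have HS1 : 1 <= rsum predT gv'.
  apply: Rle_trans (gfun_w ha0 ha1 Hdv') _.
  exact: rsum_ge1 (fun x _ => gfun_ge0 ha0 ha1 x Hdv') isT.
have := Rmult_lt_0_compat _ _ Hc12p (Rlt_le_trans _ _ _ Rlt_0_1 HS1).
lra.
Qed.
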